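(* Let $n\ge 2$ and let $\{A,B\}$ be a partition of $[n]=\{1,\dots,n\}$ into two nonempty sets. For any $n$-qubit pure state of the product form $\ket{\psi}=\ket{\psi_A}\otimes\ket{\psi_B}$, where $\ket{\psi_A}$ is a pure state on the qubits in $A$ and $\ket{\psi_B}$ a pure state on the qubits in $B$, $$\mathcal{C}(\ket{\psi})=\mathcal{C}(\ket{\psi_A})+\mathcal{C}(\ket{\psi_B})-\mathcal{C}(\ket{\psi_A})\,\mathcal{C}(\ket{\psi_B}).$$
   Context: For an $m$-qubit pure state $\ket{\phi}$ with qubits labelled by a set $S$ ($|S|=m$), the concentratable entanglement is $\mathcal{C}(\ket{\phi})=1-\frac{1}{2^{m}}\sum_{\alpha\subseteq S}\mathrm{Tr}[\rho_\alpha^2]$, where $\rho_\alpha$ is the reduced density matrix of $\ket{\phi}\!\bra{\phi}$ on the qubits in $\alpha$, with the convention $\mathrm{Tr}[\rho_\emptyset^2]=1$. *)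

(* Defs.v *)
From HB Require Import structures.
From mathcomp Require Import all_boot all_order all_algebra.
From mathcomp Require Import complex.
Set Implicit Arguments. Unset Strict Implicit. Unset Printing Implicit Defensive.
Import Order.TTheory GRing.Theory Num.Theory.
Local Open Scope ring_scope.

(* Qubits are labelled by the elements of a finite type T (the set S).
   A computational basis configuration is a function T -> bool, and a
   (not necessarily normalized) vector of the 2^|T|-dimensional Hilbert
   space is a function from configurations to complex amplitudes. *)
Definition config (T : finType) := {ffun T -> bool}.
Definition qstate (R : rcfType) (T : finType) := config T -> R[i].

Definition normalized (R : rcfType) (T : finType) (psi : qstate R T) : Prop :=
  \sum_(x : config T) psi x * (psi x)^* = 1.

Definition sub (T : finType) (alpha : {set T}) := {i : T | i \in alpha}.

Definition glue (T : finType) (alpha : {set T})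
  (a : config (sub alpha)) (b : config (sub (~: alpha))) : config T :=
  [ffun i => match insub i : option (sub alpha) with
             | Some j => a j
             | None => match insub i : option (sub (~: alpha)) with
                       | Some k => b k
                       | None => false
                       end
             end].

(* Reduced density matrix rho_alpha = Tr_{complement}( |psi><psi| ),
   indexed by configurations of the qubits in alpha. *)
Definition rdm (R : rcfType) (T : finType) (psi : qstate R T) (alpha : {set T})
  (a a' : config (sub alpha)) : R[i] :=
  \sum_(b : config (sub (~: alpha))) psi (glue a b) * (psi (glue a' b))^*.

(* Tr[rho_alpha^2], with the convention Tr[rho_emptyset^2] = 1. *)
Definition purity (R : rcfType) (T : finType) (psi : qstate R T) (alpha : {set T}) : R[i] :=
  if alpha == set0 then 1
  else \sum_(a : config (sub alpha)) \sum_(a' : config (sub alpha))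
         rdm psi a a' * rdm psi a' a.

Definition conc_ent (R : rcfType) (T : finType) (psi : qstate R T) : R[i] :=
  1 - (2 ^+ #|T|)^-1 * \sum_(alpha : {set T}) purity psi alpha.

Definition restr (T : finType) (A : {set T}) (x : config T) : config (sub A) :=
  [ffun j => x (val j)].

Definition prod_state (R : rcfType) (T : finType) (A : {set T})
  (psiA : qstate R (sub A)) (psiB : qstate R (sub (~: A))) : qstate R T :=
  fun x => psiA (restr A x) * psiB (restr (~: A) x).

(* Main.v *)
Require Import Defs.
From HB Require Import structures.
From mathcomp Require Import all_boot all_order all_algebra.
From mathcomp Require Import complex.
From mathcomp Require Import ring.
Import Order.TTheory GRing.Theory Num.Theory.
Local Open Scope ring_scope.

Set Implicit Arguments.
Section Aux.
Variable R : rcfType.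

Definition mix (T : finType) (al : {set T}) (x y : config T) : config T :=
  [ffun i => if i \in al then x i else y i].

Definition Qf (T : finType) (psi : qstate R T) (al : {set T}) : R[i] :=
  \sum_(x : config T) \sum_(y : config T)
    psi x * psi y * (psi (mix al y x))^* * (psi (mix al x y))^*.

Lemma glue_valA (T : finType) (al : {set T}) (a : config (sub al)) (b : config (sub (~: al))) (j : sub al) :
  glue a b (val j) = a j.
Proof. by rewrite /glue ffunE valK. Qed.

Lemma glue_valB (T : finType) (al : {set T}) (a : config (sub al)) (b : config (sub (~: al))) (k : sub (~: al)) :
  glue a b (val k) = b k.
Proof.
rewrite /glue ffunE insubN ?valK //.
by have := valP k; rewrite inE.
Qed.

Lemma restr_glueA (T : finType) (al : {set T}) (a : config (sub al)) (b : config (sub (~: al))) :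
  restr al (glue a b) = a.
Proof. by apply/ffunP => j; rewrite ffunE glue_valA. Qed.

Lemma restr_glueB (T : finType) (al : {set T}) (a : config (sub al)) (b : config (sub (~: al))) :
  restr (~: al) (glue a b) = b.
Proof. by apply/ffunP => j; rewrite ffunE glue_valB. Qed.

Lemma glue_restr (T : finType) (al : {set T}) (x : config T) :
  glue (restr al x) (restr (~: al) x) = x.
Proof.
apply/ffunP => i; rewrite /glue ffunE.
case: insubP => [j _ <-|Hn]; first by rewrite ffunE.
case: insubP => [k _ <-|Hn']; first by rewrite ffunE.
by move: Hn'; rewrite inE Hn.
Qed.

Lemma sum_glue (V : nmodType) (T : finType) (al : {set T}) (F : config T -> V) :
  \sum_(x : config T) F x =
  \sum_(a : config (sub al)) \sum_(b : config (sub (~: al))) F (glue a b).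
Proof.
rewrite pair_big /=.
rewrite (reindex (fun p : config (sub al) * config (sub (~: al)) => glue p.1 p.2)) //=.
exists (fun x => (restr al x, restr (~: al) x)) => [[a b] _|x _] /=.
  by rewrite restr_glueA restr_glueB.
by rewrite glue_restr.
Qed.

Lemma sum_set (V : nmodType) (T : finType) (F : {set T} -> V) :
  \sum_(al : {set T}) F al = \sum_(x : config T) F [set i | x i].
Proof.
rewrite (reindex (fun x : config T => [set i | x i])) //=.
exists (fun al : {set T} => [ffun i => i \in al] : config T) => [x _|al _].
  by apply/ffunP => i; rewrite ffunE inE.
by apply/setP => i; rewrite inE ffunE.
Qed.

Lemma mix_glue (T : finType) (al : {set T}) (a a' : config (sub al)) (b b' : config (sub (~: al))) :
  mix al (glue a b) (glue a' b') = glue a b'.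
Proof.
apply/ffunP => i; rewrite /mix /glue !ffunE.
case: insubP => [j Hj _|Hn]; first by rewrite Hj.
by rewrite (negbTE Hn).
Qed.

Lemma purity_Q_ne (T : finType) (psi : qstate R T) (al : {set T}) :
  al != set0 -> purity psi al = Qf psi al.
Proof.
move=> H; rewrite /purity (negbTE H) /Qf /rdm (sum_glue _ al).
apply: eq_bigr => a _.
under [RHS]eq_bigr do rewrite (sum_glue _ al).
rewrite [RHS]exchange_big /=.
apply: eq_bigr => a' _; rewrite big_distrlr /=.
apply: eq_bigr => b _.
apply: eq_bigr => b' _; rewrite !mix_glue; ring.
Qed.

Lemma Q_empty (T : finType) (psi : qstate R T) :
  normalized psi -> Qf psi set0 = 1.
Proof.
move=> N; rewrite /Qf.
have E : forall x y : config T, mix set0 x y = y.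
  by move=> x y; apply/ffunP => i; rewrite ffunE inE.
rewrite -[1]mulr1 -{1}N -{1}N big_distrlr /=.
apply: eq_bigr => x _; apply: eq_bigr => y _; rewrite !E; ring.
Qed.

Lemma purity_Q_norm (T : finType) (psi : qstate R T) (al : {set T}) :
  normalized psi -> purity psi al = Qf psi al.
Proof.
move=> N; have [->|H] := eqVneq al set0; last exact: purity_Q_ne.
by rewrite Q_empty // /purity eqxx.
Qed.

Lemma restr_mix (T : finType) (be al : {set T}) x y :
  restr be (mix al x y) = mix [set j : sub be | val j \in al] (restr be x) (restr be y).
Proof. by apply/ffunP => j; rewrite !ffunE inE. Qed.

Lemma Q_prod (n : nat) (A : {set 'I_n}) (psiA : qstate R (sub A))
  (psiB : qstate R (sub (~: A))) (al : {set 'I_n}) :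
  Qf (prod_state psiA psiB) al =
  Qf psiA [set j : sub A | val j \in al] * Qf psiB [set j : sub (~: A) | val j \in al].
Proof.
rewrite /Qf /prod_state (sum_glue _ A) big_distrl /=.
apply: eq_bigr => u _; rewrite big_distrl /=.
rewrite exchange_big (sum_glue _ A) /=.
apply: eq_bigr => u' _; rewrite exchange_big big_distrr /=.
apply: eq_bigr => v _; rewrite big_distrr /=.
apply: eq_bigr => v' _.
rewrite !restr_mix !restr_glueA !restr_glueB !rmorphM /=; ring.
Qed.

End Aux.
Unset Implicit Arguments.

Theorem proposition1 (R : rcfType) (n : nat) (A : {set 'I_n})
  (psiA : qstate R (sub A)) (psiB : qstate R (sub (~: A))) :
  (2 <= n)%N -> A != set0 -> ~: A != set0 ->
  normalized psiA -> normalized psiB ->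
  conc_ent (prod_state psiA psiB) =
    conc_ent psiA + conc_ent psiB - conc_ent psiA * conc_ent psiB.
Proof.
move=> _ _ _ NA NB.
have Hp : forall al : {set 'I_n}, purity (prod_state psiA psiB) al =
   purity psiA [set j : sub A | val j \in al] *
   purity psiB [set j : sub (~: A) | val j \in al].
  move=> al; rewrite [purity psiA _]purity_Q_norm // [purity psiB _]purity_Q_norm // -Q_prod.
  have [->|H] := eqVneq al set0; last exact: purity_Q_ne.
  rewrite Q_prod.
  have E1 : [set j : sub A | val j \in set0] = set0 by apply/setP => j; rewrite !inE.
  have E2 : [set j : sub (~: A) | val j \in set0] = set0 by apply/setP => j; rewrite !inE.
  by rewrite E1 E2 !Q_empty // /purity eqxx mulr1.
have HS : \sum_(al : {set 'I_n}) purity (prod_state psiA psiB) al =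
    (\sum_(be : {set sub A}) purity psiA be) *
    (\sum_(ga : {set sub (~: A)}) purity psiB ga).
  rewrite sum_set (sum_glue _ A) (sum_set _ (purity psiA)) (sum_set _ (purity psiB)).
  rewrite big_distrlr /=.
  apply: eq_bigr => u _; apply: eq_bigr => v _.
  rewrite Hp.
  have E1 : [set j : sub A | val j \in [set i | glue u v i]] = [set i | u i].
    by apply/setP => j; rewrite !inE glue_valA.
  have E2 : [set j : sub (~: A) | val j \in [set i | glue u v i]] = [set i | v i].
    by apply/setP => j; rewrite !inE glue_valB.
  by rewrite E1 E2.
rewrite /conc_ent HS !card_sig card_ord.
have Hc : n = (#|[pred x | x \in A]| + #|[pred x | x \in ~: A]|)%N.
  by rewrite -{1}(card_ord n) -(cardsC A); congr (_ + _)%N; apply: eq_card.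
rewrite {1}Hc exprD invfM.
ring.
Qed.
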